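(* In $H_\ast M\xi=\mathbb{Z}\langle Z_1,Z_2,\ldots\rangle$ with the filtration $F_k$ by polynomial degree in the $Z_i$: (1) for $a\in F_k$ and $l>0$ one has $\phi_l(a)\equiv[Z_l,a]\bmod F_{k+2}$; (2) $\Upsilon_{p,q}\equiv[Z_p,Z_q]\bmod F_3$ for all $p,q$.
   Context: $M\xi$ is the Baker–Richter spectrum (Thom spectrum of $\Omega\Sigma\mathbb{C}P^\infty\to BU$), complex oriented with orientation $x$. $H=H\mathbb{Z}$. $H_\ast M\xi\cong H_\ast\Omega\Sigma\mathbb{C}P^\infty=\mathbb{Z}\langle Z_1,Z_2,\ldots\rangle$ is free associative, $Z_k$ the image of the generator of $H_{2k}\mathbb{C}P^\infty$, $Z_0=1$. The Hurewicz map $M\xi^\ast(\mathbb{C}P^\infty)^n\to H_\ast M\xi\otimes\mathbb{Z}[[T_1,\ldots,T_n]]$ (with $T_j$ central) is an injective ring map sending $x_j\mapsto\sum_{k\ge0}Z_kT_j^{1+k}$; in particular $M\xi_\ast\subset H_\ast M\xi$. For $a\in H_\ast M\xi$ define $\phi_k(a)\in H_\ast M\xi$ recursively by the identity $\sum_{j\ge0}(Z_ja)T^{1+j}=\sum_{k\ge0}\phi_k(a)\big(\sum_{j\ge0}Z_jT^{1+j}\big)^{1+k}$; on $M\xi_\ast$ these agree with the operators defined by $xa=\sum_k\phi_k(a)x^{1+k}$ in $M\xi^\ast[[x]]$. $\Upsilon_{p,q}\in M\xi_\ast\subset H_\ast M\xi$ are defined by $yx=\sum_{p,q\ge0}\Upsilon_{p,q}x^{1+p}y^{1+q}$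 in $M\xi^\ast(\mathbb{C}P^\infty\times\mathbb{C}P^\infty)$. $F_k$ is the span of monomials $Z_{i_1}\cdots Z_{i_m}$ (with all $i_j\ge1$) of length $m\ge k$. *)

(* Defs.v *)
From mathcomp Require Import all_boot all_order all_algebra.
Set Implicit Arguments. Unset Strict Implicit. Unset Printing Implicit Defensive.
Import Order.TTheory GRing.Theory Num.Theory.
Local Open Scope ring_scope.

(* A word [:: i1; ...; im] stands for the monomial Z_{i1} ... Z_{im}.
   An element is its coefficient function on words (a formal noncommutative
   power series over Z); H_* Mxi is the subset of finitely supported ones on
   words with all letters >= 1 (see [inH]). *)
Definition ncs := seq nat -> int.

Definition ncadd (a b : ncs) : ncs := fun w => a w + b w.
Definition ncsub (a b : ncs) : ncs := fun w => a w - b w.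
Definition ncmul (a b : ncs) : ncs :=
  fun w => \sum_(i < (size w).+1) a (take i w) * b (drop i w).
Definition ncsum (n : nat) (F : nat -> ncs) : ncs := fun w => \sum_(i < n) F i w.
Definition comm (a b : ncs) : ncs := ncsub (ncmul a b) (ncmul b a).

(* the generator Z_j, with the convention Z_0 = 1 *)
Definition Zg (j : nat) : ncs :=
  fun w => if j == 0%N then (if w == [::] then 1 else 0)
           else (if w == [:: j] then 1 else 0).

(* pw k n = coefficient of T^(n+1) in x^(1+k), where x = sum_j Z_j T^(1+j)
   (T central). *)
Fixpoint pw (k n : nat) : ncs :=
  match k with
  | 0 => Zg n
  | k'.+1 => ncsum n (fun i => ncmul (pw k' i) (Zg (n - i - 1)))
  end.

Definition inH (a : ncs) : Prop :=
  (exists s : seq (seq nat), forall w, a w != 0 -> w \in s) /\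
  (forall w, a w != 0 -> all (fun i => 0 < i)%N w).

Definition inF (k : nat) (a : ncs) : Prop :=
  inH a /\ (forall w, a w != 0 -> (k <= size w)%N).

Definition congF (k : nat) (b c : ncs) : Prop := inF k (ncsub b c).

(* phi is the family (phi_k(a))_k defined by
   sum_j (Z_j a) T^(1+j) = sum_k phi_k(a) (sum_j Z_j T^(1+j))^(1+k),
   i.e. coefficientwise in T^(n+1). *)
Definition is_phi (a : ncs) (phi : nat -> ncs) : Prop :=
  forall n, ncmul (Zg n) a = ncsum n.+1 (fun k => ncmul (phi k) (pw k n)).

(* Ups is the family Upsilon_{p,q} defined by y x = sum Ups_{p,q} x^(1+p) y^(1+q),
   read through the Hurewicz image x |-> sum Z_k S^(1+k), y |-> sum Z_k T^(1+k)
   (S, T central), coefficientwise in S^(1+m) T^(1+n). *)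
Definition is_Ups (Ups : nat -> nat -> ncs) : Prop :=
  forall m n, ncmul (Zg n) (Zg m) =
    ncsum m.+1 (fun p => ncsum n.+1 (fun q =>
      ncmul (ncmul (Ups p q) (pw p m)) (pw q n))).

(* Main.v *)
Require Import Defs.
From mathcomp Require Import all_boot all_order all_algebra zify ring.
Set Implicit Arguments. Unset Strict Implicit. Unset Printing Implicit Defensive.
Import Order.TTheory GRing.Theory Num.Theory.
Local Open Scope ring_scope.


Lemma sum_nz n (f : 'I_n -> int) : \sum_(i < n) f i != 0 -> exists i, f i != 0.
Proof.
case: (pickP (fun i => f i != 0)) => [i Hi|H]; first by exists i.
by rewrite big1 ?eqxx // => i _; apply/eqP; move: (H i) => /negbFE.
Qed.

Lemma mul_nz a b w : ncmul a b w != 0 ->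
  exists i : nat, a (take i w) != 0 /\ b (drop i w) != 0.
Proof.
move=> /sum_nz [i]; rewrite mulf_eq0 negb_or => /andP [h1 h2].
by exists i.
Qed.

Lemma inF_ext k a b : (forall w, a w = b w) -> inF k a -> inF k b.
Proof.
move=> E [[[s Hs] Hp] Hk]; split; first split.
- by exists s => w; rewrite -E; apply: Hs.
- by move=> w; rewrite -E; apply: Hp.
- by move=> w; rewrite -E; apply: Hk.
Qed.

Lemma inF0 k : inF k (fun _ => 0).
Proof. by split; first split; first exists [::]; move=> w; rewrite eqxx. Qed.

Lemma inF_le j k a : (j <= k)%N -> inF k a -> inF j a.
Proof.
move=> jk [H Hk]; split => // w /Hk; exact: leq_trans.
Qed.

Lemma inF_add k a b : inF k a -> inF k b -> inF k (ncadd a b).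
Proof.
move=> [[[s1 H1] P1] K1] [[[s2 H2] P2] K2].
have nz w : ncadd a b w != 0 -> a w != 0 \/ b w != 0.
  rewrite /ncadd => H; case: (eqVneq (a w) 0) => Ha; last by left.
  by right; move: H; rewrite Ha add0r.
split; first split.
- exists (s1 ++ s2) => w /nz [/H1|/H2]; rewrite mem_cat => ->; rewrite ?orbT //.
- by move=> w /nz [/P1|/P2].
- by move=> w /nz [/K1|/K2].
Qed.

Lemma inF_opp k a : inF k a -> inF k (fun w => - a w).
Proof.
move=> [[[s1 H1] P1] K1]; split; first split.
- by exists s1 => w; rewrite oppr_eq0; apply: H1.
- by move=> w; rewrite oppr_eq0; apply: P1.
- by move=> w; rewrite oppr_eq0; apply: K1.
Qed.

Lemma inF_sub k a b : inF k a -> inF k b -> inF k (ncsub a b).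
Proof.
move=> Ha Hb; apply: (@inF_ext _ (ncadd a (fun w => - b w))) => //.
exact: inF_add (inF_opp _).
Qed.

Lemma inF_mul i j a b : inF i a -> inF j b -> inF (i + j) (ncmul a b).
Proof.
move=> [[[s1 H1] P1] K1] [[[s2 H2] P2] K2].
split; first split.
- exists [seq u ++ v | u <- s1, v <- s2] => w /mul_nz [n [/H1 h1 /H2 h2]].
  by rewrite -(cat_take_drop n w); apply: allpairs_f.
- move=> w /mul_nz [n [/P1 h1 /P2 h2]].
  by rewrite -(cat_take_drop n w) all_cat h1 h2.
- move=> w /mul_nz [n [/K1 h1 /K2 h2]].
  by rewrite -(cat_take_drop n w) size_cat leq_add.
Qed.

Lemma inF_sum k n F : (forall i, (i < n)%N -> inF k (F i)) -> inF k (ncsum n F).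
Proof.
elim: n => [|n IH] H.
  by apply: (inF_ext _ (inF0 k)) => w; rewrite /ncsum big_ord0.
apply: (@inF_ext _ (ncadd (ncsum n F) (F n))).
  by move=> w; rewrite /ncsum /ncadd big_ord_recr.
apply: inF_add; last exact: H.
by apply: IH => i Hi; apply: H; rewrite ltnS ltnW.
Qed.

Lemma mul_ext a a' b b' w : (forall u, a u = a' u) -> (forall u, b u = b' u) ->
  ncmul a b w = ncmul a' b' w.
Proof. by move=> Ea Eb; apply: eq_bigr => i _; rewrite Ea Eb. Qed.

Lemma mul0 a b w : (forall u, a u = 0) -> ncmul a b w = 0.
Proof. by move=> E; apply: big1 => i _; rewrite E mul0r. Qed.

Lemma ncmul1l a w : ncmul (Zg 0) a w = a w.
Proof.
rewrite /ncmul big_ord_recl /= /Zg /= take0 drop0 mul1r big1 ?addr0 // => i _.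
case: eqP => [E|]; last by rewrite mul0r.
move: (f_equal size E) (ltn_ord i); rewrite size_take /=.
move: (nat_of_ord i) => k; rewrite /bump /=.
by case: ifP => // _ ->.
Qed.

Lemma ncmul1r a w : ncmul a (Zg 0) w = a w.
Proof.
rewrite /ncmul big_ord_recr /= /Zg /= take_size drop_size eqxx mulr1 big1 ?add0r //.
move=> i _; case: eqP => [E|]; last by rewrite mulr0.
by move: (f_equal size E); rewrite size_drop /= => /eqP; rewrite subn_eq0 leqNgt ltn_ord.
Qed.

Lemma Zg_sum j w : Zg j w != 0 -> sumn w = j.
Proof.
rewrite /Zg; case: (eqVneq j 0%N) => [->|_]; case: (eqVneq w [::]) => [->|_] //=;
 case: (eqVneq w [:: j]) => [->|_] //=; by rewrite addn0.
Qed.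

Lemma inF_Zg0 j : inF 0 (Zg j).
Proof.
split => //; split.
  exists [:: [::]; [:: j]] => w; rewrite /Zg; case: (eqVneq j 0%N) => _;
  [case: (eqVneq w [::]) => [->|] | case: (eqVneq w [:: j]) => [->|]] => //=;
  by rewrite !inE eqxx ?orbT.
move=> w; rewrite /Zg; case: (eqVneq j 0%N) => [jz|jn].
  by case: (eqVneq w [::]) => [->|].
by case: (eqVneq w [:: j]) => [->|] //=; rewrite lt0n jn.
Qed.

Lemma inF_Zg j : (0 < j)%N -> inF 1 (Zg j).
Proof.
move=> jp; case: (inF_Zg0 j) => H _; split => // w.
rewrite /Zg; case: (eqVneq j 0%N) => [j0|_]; first by rewrite j0 in jp.
by case: (eqVneq w [:: j]) => [->|].
Qed.

Lemma pw_sum k n w : pw k n w != 0 -> (sumn w + k = n)%N.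
Proof.
elim: k n w => [|k IH] n w /=; first by rewrite addn0; apply: Zg_sum.
rewrite /ncsum => /sum_nz [i /mul_nz [j [/IH h1 /Zg_sum h2]]].
rewrite -(cat_take_drop j w) sumn_cat; move: (ltn_ord i); lia.
Qed.

Lemma pw_lt k n w : (n < k)%N -> pw k n w = 0.
Proof.
move=> nk; apply/eqP; apply: contraT => /pw_sum; lia.
Qed.

Lemma inF_pw0 k n : inF 0 (pw k n).
Proof.
elim: k n => [|k IH] n /=; first exact: inF_Zg0.
apply: inF_sum => i _; exact: (inF_mul (IH i) (inF_Zg0 _)).
Qed.

Lemma inF_pw1 k n : (k < n)%N -> inF 1 (pw k n).
Proof.
move=> kn; case: (inF_pw0 k n) => H _; split => // w /pw_sum.
by case: w => //= ?; lia.
Qed.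

Lemma pw_diag n w : pw n n w = Zg 0 w.
Proof.
elim: n w => [|n IH] w //=.
rewrite /ncsum big_ord_recr /= subSnn subnn big1 ?add0r.
  by rewrite (mul_ext _ IH (fun _ => erefl)) ncmul1r.
by move=> i _; apply: mul0 => u; apply: pw_lt.
Qed.

Lemma inF_comm i j a b : inF i a -> inF j b -> inF (i + j) (comm a b).
Proof.
move=> Ha Hb; apply: inF_sub; first exact: inF_mul.
by rewrite addnC; apply: inF_mul.
Qed.

Arguments pw : simpl never.
Lemma part1 k a phi : inF k a -> is_phi a phi ->
  forall l : nat, (0 < l)%N -> congF (k + 2) (phi l) (comm (Zg l) a).
Proof.
move=> Ha H.
have phi0 w : phi 0%N w = a w.
  have := congr1 (fun f => f w) (H 0%N); rewrite /ncsum /= big_ord1 ncmul1l => ->.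
  by rewrite ncmul1r.
elim/ltn_ind => l IH lp; case: l lp IH => // l' _ IH.
have Fj j : (0 < j < l'.+1)%N -> inF (k + 1) (phi j).
  move=> /andP [j0 jl]; have := IH j jl j0 => Hc.
  have Hcm : inF (k + 1) (comm (Zg j) a) by rewrite addnC; apply: inF_comm => //; exact: inF_Zg.
  apply: (@inF_ext _ (ncadd (ncsub (phi j) (comm (Zg j) a)) (comm (Zg j) a))).
    by move=> w; rewrite /ncadd /ncsub subrK.
  apply: inF_add => //; apply: inF_le Hc; lia.
apply: (@inF_ext _ (fun w => - ncsum l' (fun i => ncmul (phi i.+1) (pw i.+1 l'.+1)) w)).
  move=> w; have := congr1 (fun f => f w) (H l'.+1).
  rewrite /ncsum big_ord_recr big_ord_recl /=.
  rewrite (mul_ext _ (fun u => erefl) (@pw_diag _)) ncmul1r.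
  rewrite (mul_ext _ phi0 (fun u => erefl)) /ncsub /comm /ncsub => E.
  have -> : phi l'.+1 w = ncmul (Zg l'.+1) a w - (ncmul a (pw 0 l'.+1) w +
     \sum_(i < l') ncmul (phi (lift ord0 i)) (pw (lift ord0 i) l'.+1) w) by rewrite E; ring.
  by rewrite /=; ring.
apply: inF_opp; apply: inF_sum => i il.
have -> : (k + 2 = (k + 1) + 1)%N by lia.
apply: inF_mul; first by apply: Fj; lia.
by apply: inF_pw1; lia.
Qed.

Lemma sum_delta n j (c : int) : (j < n)%N ->
  \sum_(i < n) (if (i == j :> nat) then c else 0) = c.
Proof.
elim: n => [|n IH] //= jn; rewrite big_ord_recr /=.
case: (ltnP j n) => jn'.
  by rewrite IH // (_ : (n == j) = false) ?addr0 //; apply/eqP; lia.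
have -> : j = n by lia.
rewrite eqxx big1 ?add0r // => i _; rewrite (_ : (i == n :> nat) = false) //.
by apply/eqP; move: (ltn_ord i); lia.
Qed.

Lemma sum_delta2 m n a b (c : int) : (a < m)%N -> (b < n)%N ->
  \sum_(p < m) \sum_(q < n) (if (p == a :> nat) && (q == b :> nat) then c else 0) = c.
Proof.
move=> am bn.
rewrite (eq_bigr (fun p : 'I_m => if (p == a :> nat) then c else 0)) ?sum_delta //.
move=> p _; case: (p == a :> nat) => /=; first exact: sum_delta.
by rewrite big1.
Qed.

Lemma split2 m n (f : nat -> nat -> int) : (m, n) <> (0%N, 0%N) ->
  \sum_(p < m.+1) \sum_(q < n.+1) f p q = f 0%N 0%N + f m n +
  \sum_(p < m.+1) \sum_(q < n.+1)
     (if ((p == 0%N :> nat) && (q == 0%N :> nat)) || ((p == m :> nat) && (q == n :> nat))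
      then 0 else f p q).
Proof.
move=> mn.
have E (p q : nat) : f p q =
   (if ((p == 0%N) && (q == 0%N)) || ((p == m) && (q == n)) then 0 else f p q) +
   (if (p == 0%N) && (q == 0%N) then f 0%N 0%N else 0) +
   (if (p == m) && (q == n) then f m n else 0).
  have [/andP [/eqP e1 /eqP e2]|nb1] := boolP ((p == 0%N) && (q == 0%N)).
    subst; case: (boolP ((0 == m)%N && (0 == n)%N)) => [/andP [/eqP e1 /eqP e2]|_].
      by subst.
    by rewrite /= add0r addr0.
  have [/andP [/eqP e1 /eqP e2]|nb2] := boolP ((p == m) && (q == n)).
    by subst; rewrite orbT add0r.
  by rewrite /= !addr0.
under eq_bigr => p _ do under eq_bigr => q _ do rewrite E.
under eq_bigr => p _ do rewrite big_split /= big_split /=.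
rewrite big_split /= big_split /= (@sum_delta2 m.+1 n.+1 0 0 (f 0%N 0%N)) // (@sum_delta2 m.+1 n.+1 m n (f m n)) //.
by rewrite -addrA addrC.
Qed.
Arguments pw : simpl never.

Lemma inF_commZ p q : inF 2 (comm (Zg q) (Zg p)).
Proof.
case: (posnP p) => [->|pp].
  by apply: (inF_ext _ (inF0 _)) => w; rewrite /comm /ncsub ncmul1l ncmul1r subrr.
case: (posnP q) => [->|qp].
  by apply: (inF_ext _ (inF0 _)) => w; rewrite /comm /ncsub ncmul1l ncmul1r subrr.
by apply: (inF_comm (inF_Zg qp) (inF_Zg pp)).
Qed.

Lemma part2 Ups : is_Ups Ups -> forall p q : nat, (p, q) <> (0%N, 0%N) ->
      congF 3 (Ups p q) (comm (Zg q) (Zg p)).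
Proof.
move=> H.
have U00 w : Ups 0%N 0%N w = Zg 0 w.
  have := congr1 (fun f => f w) (H 0%N 0%N).
  rewrite /ncsum !big_ord1 ncmul1l => ->.
  rewrite (mul_ext _ (fun u => erefl) (@pw_diag _)) ncmul1r.
  by rewrite (mul_ext _ (fun u => erefl) (@pw_diag _)) ncmul1r.
suff S s : forall m n, (m + n = s)%N -> (m, n) <> (0%N, 0%N) ->
      congF 3 (Ups m n) (comm (Zg n) (Zg m)) by move=> p q; apply: S.
elim/ltn_ind: s => s IH m n mns mn.
have F2 p q : (p, q) <> (0%N, 0%N) -> (p + q < s)%N -> inF 2 (Ups p q).
  move=> pq pqs; have Hc := IH _ pqs p q erefl pq.
  apply: (@inF_ext _ (ncadd (ncsub (Ups p q) (comm (Zg q) (Zg p))) (comm (Zg q) (Zg p)))).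
    by move=> w; rewrite /ncadd /ncsub subrK.
  apply: inF_add; last exact: inF_commZ.
  exact: inF_le Hc.
pose T p q := ncmul (ncmul (Ups p q) (pw p m)) (pw q n).
pose G p q w := if ((p == 0%N :> nat) && (q == 0%N :> nat)) || ((p == m :> nat) && (q == n :> nat))
      then 0 else T p q w.
apply: (@inF_ext _ (fun w => - ncsum m.+1 (fun p => ncsum n.+1 (fun q => G p q)) w)).
  move=> w; have := congr1 (fun f => f w) (H m n).
  rewrite /ncsum (split2 (fun p q => ncmul (ncmul (Ups p q) (pw p m)) (pw q n) w) mn).
  have -> : ncmul (ncmul (Ups 0%N 0%N) (pw 0 m)) (pw 0 n) w = ncmul (Zg m) (Zg n) w.
    apply: mul_ext => // u; rewrite (mul_ext _ U00 (fun _ => erefl)) ncmul1l //.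
  have -> : ncmul (ncmul (Ups m n) (pw m m)) (pw n n) w = Ups m n w.
    rewrite (mul_ext _ (fun u => erefl) (@pw_diag _)) ncmul1r.
    by rewrite (mul_ext _ (fun u => erefl) (@pw_diag _)) ncmul1r.
  move=> E; rewrite /ncsub /comm /ncsub E /G /T; ring.
apply: inF_opp; apply: inF_sum => p pm; apply: inF_sum => q qn.
have [hc|hc] := boolP (((p == 0%N :> nat) && (q == 0%N :> nat)) || ((p == m :> nat) && (q == n :> nat))).
  by apply: (inF_ext _ (inF0 _)) => w; rewrite /G hc.
apply: (@inF_ext _ (T p q)); first by move=> w; rewrite /G (negbTE hc).
move: hc; rewrite negb_or => /andP [c1 c2].
have pq : (p, q) <> (0%N, 0%N) by case=> e1 e2; move: c1; rewrite e1 e2.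
have Hu : inF 2 (Ups p q).
  apply: F2 => //; rewrite -mns.
  move: c2; rewrite negb_and => /orP [/eqP|/eqP]; lia.
move: c2; rewrite negb_and => /orP [/eqP h|/eqP h].
  have -> : (3 = 2 + 1 + 0)%N by [].
  apply: inF_mul; last exact: inF_pw0.
  by apply: inF_mul => //; apply: inF_pw1; lia.
have -> : (3 = 2 + 0 + 1)%N by [].
apply: inF_mul; last by apply: inF_pw1; lia.
by apply: inF_mul => //; apply: inF_pw0.
Qed.

Theorem mainTheorem13 :
  (forall (k : nat) (a : ncs) (phi : nat -> ncs),
      inF k a -> is_phi a phi ->
      forall l : nat, (0 < l)%N -> congF (k + 2) (phi l) (comm (Zg l) a))
  /\
  (forall Ups : nat -> nat -> ncs, is_Ups Ups ->
      forall p q : nat, (p, q) <> (0%N, 0%N) ->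
      congF 3 (Ups p q) (comm (Zg q) (Zg p))).
Proof.
split; [exact: part1 | exact: part2].
Qed.
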